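(* Let $\xi<-6$. There exists $\phi_0\in(0,\pi/4]$ such that for every $\phi\in(0,\phi_0]$ there is a constant $c=c(\xi,\phi)>0$ with the following property: for $z=|z|e^{\mathrm{i}w}$, $$\operatorname{Re}[2\mathrm{i}\theta(z)]\ge c|\sin w|(|z|^{-1}-|z|)\quad\text{for } z\in\Omega_{01}\cup\Omega_{02},$$ $$\operatorname{Re}[2\mathrm{i}\theta(z)]\le -c|\sin w|(|z|^{-1}-|z|)\quad\text{for } z\in\Omega_{03}\cup\Omega_{04}.$$
   Context: $\theta(z)=\frac12(z+z^{-1})\big[\xi-2+(z-z^{-1})^2\big]$. For $\xi<-6$ let $\zeta_1=\sqrt{(-\xi-\sqrt{\xi^2-36})/6}\in(0,1)$ (the smallest positive stationary point of $\theta$). Writing $z=u+\mathrm{i}v$, the regions are $\Omega_{01}=\{0<u<\zeta_1/2,\ 0<v<u\tan\phi\}$, $\Omega_{02}=\{-\zeta_1/2<u<0,\ 0<v<|u|\tan\phi\}$, $\Omega_{03}=\{-\zeta_1/2<u<0,\ -|u|\tan\phi<v<0\}$, $\Omega_{04}=\{0<u<\zeta_1/2,\ -u\tan\phi<v<0\}$. *)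

(* Defs.v *)
From Stdlib Require Import Reals.
From Coquelicot Require Import Coquelicot.
Open Scope R_scope.

Definition theta (xi : R) (z : C) : C :=
  ((/ 2 : C) * (z + / z) * ((xi - 2 : R) + (z - / z) * (z - / z)))%C.

Definition zeta1 (xi : R) : R := sqrt ((- xi - sqrt (xi ^ 2 - 36)) / 6).

Definition Omega01 (xi phi : R) (z : C) : Prop :=
  0 < Re z < zeta1 xi / 2 /\ 0 < Im z < Re z * tan phi.
Definition Omega02 (xi phi : R) (z : C) : Prop :=
  - (zeta1 xi / 2) < Re z < 0 /\ 0 < Im z < Rabs (Re z) * tan phi.
Definition Omega03 (xi phi : R) (z : C) : Prop :=
  - (zeta1 xi / 2) < Re z < 0 /\ - (Rabs (Re z) * tan phi) < Im z < 0.
Definition Omega04 (xi phi : R) (z : C) : Prop :=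
  0 < Re z < zeta1 xi / 2 /\ - (Re z * tan phi) < Im z < 0.

(* Main.v *)
Require Import Defs.
From Stdlib Require Import Reals Lra Psatz.
From Coquelicot Require Import Coquelicot.
Open Scope R_scope.

Definition FF xi x y := let q := x*x+y*y in
  xi - 2 + (1-q)*(1-q)*(3*x*x-y*y)/(q*q) + 4*(2*x*x-y*y)/q.

Lemma ident xi x y : x*x+y*y <> 0 ->
  Re (2 * Ci * theta xi (x,y))%C = y*(1-(x*x+y*y))/(x*x+y*y) * FF xi x y.
Proof.
intros H. unfold theta, FF.
unfold Cmult, Cplus, Cminus, Copp, Cinv, Ci, RtoC, Re; simpl.
field. auto.
Qed.
Lemma Fpos xi t x y : 0 < t < 1 -> 3*t*t + xi*t + 3 = 0 ->
  x <> 0 -> x*x < t/4 -> 4*(y*y) <= x*x -> FF xi x y >= 1/5.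
Proof.
intros [t0 t1] Ht hx hxt hy.
unfold FF.
set (q := x*x+y*y).
assert (qp : 0 < q) by (unfold q; nra).
assert (q5 : 5*(y*y) <= q) by (unfold q; lra).
assert (qt : q < 5*t/16) by (unfold q; lra).
assert (E1 : (1-q)*(1-q)*(3*x*x-y*y)/(q*q) = ((1-q)*(1-q)/q) * ((3*x*x-y*y)/q)) by (field; lra).
assert (E2 : 4*(2*x*x-y*y)/q = 4*((2*x*x-y*y)/q)) by (field; lra).
rewrite E1, E2.
assert (a1 : (3*x*x-y*y)/q = 3 - 4*(y*y/q)) by (unfold q in *; field; lra).
assert (a2 : (2*x*x-y*y)/q = 2 - 3*(y*y/q)) by (unfold q in *; field; lra).
assert (uq : y*y/q * q = y*y) by (field; lra).
assert (u0 : 0 <= y*y/q) by (unfold Rdiv; apply Rmult_le_pos; [nra| left; apply Rinv_0_lt_compat; lra]).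
assert (u1 : y*y/q <= 1/5) by nra.
rewrite a1, a2.
assert (b1 : (1-q)*(1-q)/q = /q - 2 + q) by (field; lra).
assert (iq : / q > /(5*t/16)).
{ apply Rlt_gt. apply Rinv_lt_contravar. nra. lra. }
assert (it : /(5*t/16) = (16/5) * /t) by (field; lra).
assert (xie : xi = -3*t - 3 * /t).
{ apply Rmult_eq_reg_r with t; [|lra]. rewrite Rmult_minus_distr_r. replace (3 * /t * t) with 3 by (field; lra). lra. }
assert (ti : /t > 1). { rewrite <- Rinv_1. apply Rinv_lt_contravar; lra. }
assert (B : (1-q)*(1-q)/q >= 0).
{ unfold Rdiv. apply Rle_ge, Rmult_le_pos. nra. left; apply Rinv_0_lt_compat; lra. }
rewrite b1 in *. rewrite it in iq.
nra.
Qed.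

Lemma zfacts xi : xi < -6 -> exists A, 0 < A < 1 /\ 3*A*A + xi*A + 3 = 0 /\
  zeta1 xi * zeta1 xi = A /\ 0 <= zeta1 xi.
Proof.
intros hxi.
set (S := sqrt (xi^2 - 36)).
assert (S0 : 0 <= S) by apply sqrt_pos.
assert (S2 : S * S = xi^2 - 36) by (apply sqrt_sqrt; nra).
assert (SA : S < - xi) by nra.
assert (SB : -xi - 6 < S) by nra.
exists ((-xi - S)/6).
split; [lra|]. split; [nra|]. split.
- unfold zeta1. fold S. apply sqrt_sqrt. lra.
- apply sqrt_pos.
Qed.

Lemma key xi t x y r w : 0 < t < 1 -> 3*t*t + xi*t + 3 = 0 ->
  x <> 0 -> x*x < t/4 -> 4*(y*y) <= x*x -> r = sqrt (x*x+y*y) -> y = r * sin w ->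
  Re (2 * Ci * theta xi (x,y))%C = y*(1-(x*x+y*y))/(x*x+y*y) * FF xi x y /\
  Rabs (sin w) * (/ r - r) = Rabs y * ((1-(x*x+y*y))/(x*x+y*y)) /\
  0 < (1-(x*x+y*y))/(x*x+y*y) /\ FF xi x y >= 1/5.
Proof.
intros ht Ht hx hxt hy hr hyw.
assert (qp : 0 < x*x+y*y) by nra.
assert (q1 : x*x+y*y < 1) by lra.
assert (rp : 0 < r) by (rewrite hr; apply sqrt_lt_R0; lra).
assert (r2 : r * r = x*x+y*y) by (rewrite hr; apply sqrt_sqrt; lra).
split; [apply ident; lra|].
split.
- assert (ay : Rabs y = r * Rabs (sin w)) by (rewrite hyw, Rabs_mult, (Rabs_right r) by lra; reflexivity).
  rewrite ay, <- r2. field. lra.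
- split; [|eapply Fpos; eauto].
  unfold Rdiv. apply Rmult_lt_0_compat; [lra| apply Rinv_0_lt_compat; lra].
Qed.

Lemma sqb x y tp : 0 <= tp <= 1/2 -> Rabs y < Rabs x * tp -> 4*(y*y) <= x*x.
Proof.
intros h1 h2.
assert (e1 : y*y = Rabs y * Rabs y) by (rewrite <- Rabs_mult; symmetry; apply Rabs_pos_eq; nra).
assert (e2 : x*x = Rabs x * Rabs x) by (rewrite <- Rabs_mult; symmetry; apply Rabs_pos_eq; nra).
rewrite e1, e2. pose proof (Rabs_pos y). pose proof (Rabs_pos x).
assert (Rabs y <= Rabs x / 2) by nra. nra.
Qed.

Theorem mainTheorem3 :
  forall xi : R, xi < -6 ->
  exists phi0 : R, 0 < phi0 <= PI / 4 /\
  forall phi : R, 0 < phi <= phi0 ->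
  exists c : R, 0 < c /\
    (forall (z : C) (w : R),
       (Omega01 xi phi z \/ Omega02 xi phi z) ->
       z = ((Cmod z * cos w)%R, (Cmod z * sin w)%R) ->
       Re (2 * Ci * theta xi z)%C >= c * Rabs (sin w) * (/ Cmod z - Cmod z)) /\
    (forall (z : C) (w : R),
       (Omega03 xi phi z \/ Omega04 xi phi z) ->
       z = ((Cmod z * cos w)%R, (Cmod z * sin w)%R) ->
       Re (2 * Ci * theta xi z)%C <= - (c * Rabs (sin w) * (/ Cmod z - Cmod z))).
Proof.
intros xi hxi.
destruct (zfacts xi hxi) as [A [hA [HA [hz hz0]]]].
assert (a0 : 0 < atan (1/2)) by (rewrite <- atan_0; apply atan_increasing; lra).
assert (a1 : atan (1/2) < PI/4) by (rewrite <- atan_1; apply atan_increasing; lra).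
assert (PI4 : 0 < PI/4) by (generalize PI_RGT_0; lra).
exists (atan (1/2)). split; [lra|].
intros phi hphi.
assert (tp : 0 < tan phi) by (apply tan_gt_0; lra).
assert (tl : tan phi <= 1/2).
{ rewrite <- (tan_atan (1/2)). apply tan_incr_1; lra. }
exists (1/5). split; [lra|].
assert (Hm : forall (x y : R), x * x < A/4 -> x <> 0 -> 4*(y*y) <= x*x -> forall w,
   (x, y) = ((Cmod (x,y) * cos w)%R, (Cmod (x,y) * sin w)%R) ->
   Re (2 * Ci * theta xi (x,y))%C = y*(1-(x*x+y*y))/(x*x+y*y) * FF xi x y /\
   Rabs (sin w) * (/ Cmod (x,y) - Cmod (x,y)) = Rabs y * ((1-(x*x+y*y))/(x*x+y*y)) /\
   0 < (1-(x*x+y*y))/(x*x+y*y) /\ FF xi x y >= 1/5).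
{ intros x y h1 h2 h3 w E. injection E as E1 E2.
  eapply key; eauto.
  unfold Cmod in *. simpl in *. rewrite E2. f_equal. ring. }
split.
- intros [x y] w Hreg E.
  assert (Ha : 0 < y /\ x * x < A/4 /\ x <> 0 /\ 4*(y*y) <= x*x).
  { destruct Hreg as [[[h1 h2] [h3 h4]]|[[h1 h2] [h3 h4]]]; simpl in *.
    - refine (conj _ (conj _ (conj _ _))); [lra| rewrite <- hz; nra | lra | apply (sqb x y (tan phi)); [lra|rewrite (Rabs_pos_eq x), (Rabs_pos_eq y) by lra; lra] ].
    - refine (conj _ (conj _ (conj _ _))); [lra| rewrite <- hz; nra | lra | apply (sqb x y (tan phi)); [lra|rewrite (Rabs_left x), (Rabs_pos_eq y) by lra; rewrite Rabs_left in h4 by lra; lra] ]. }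
  destruct Ha as [hy [h1 [h2 h3]]].
  destruct (Hm x y h1 h2 h3 w E) as [e1 [e2 [p F]]].
  rewrite Rmult_assoc, e2, e1, Rabs_right by lra.
  replace (y * (1 - (x * x + y * y)) / (x * x + y * y) * FF xi x y) with (y * ((1 - (x * x + y * y)) / (x * x + y * y)) * FF xi x y) by (unfold Rdiv; ring).
  set (P := (1 - (x * x + y * y)) / (x * x + y * y)) in *.
  assert (yP : 0 < Rabs y * P) by (apply Rmult_lt_0_compat; [apply Rabs_pos_lt; lra | lra]).
  rewrite ?Rabs_right, ?Rabs_left in yP by lra. nra.
- intros [x y] w Hreg E.
  assert (Ha : y < 0 /\ x * x < A/4 /\ x <> 0 /\ 4*(y*y) <= x*x).
  { destruct Hreg as [[[h1 h2] [h3 h4]]|[[h1 h2] [h3 h4]]]; simpl in *.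
    - refine (conj _ (conj _ (conj _ _))); [lra| rewrite <- hz; nra | lra | apply (sqb x y (tan phi)); [lra|rewrite (Rabs_left x), (Rabs_left y) by lra; rewrite Rabs_left in h3 by lra; lra] ].
    - refine (conj _ (conj _ (conj _ _))); [lra| rewrite <- hz; nra | lra | apply (sqb x y (tan phi)); [lra|rewrite (Rabs_pos_eq x), (Rabs_left y) by lra; lra] ]. }
  destruct Ha as [hy [h1 [h2 h3]]].
  destruct (Hm x y h1 h2 h3 w E) as [e1 [e2 [p F]]].
  rewrite Rmult_assoc, e2, e1, Rabs_left by lra.
  replace (y * (1 - (x * x + y * y)) / (x * x + y * y) * FF xi x y) with (y * ((1 - (x * x + y * y)) / (x * x + y * y)) * FF xi x y) by (unfold Rdiv; ring).
  set (P := (1 - (x * x + y * y)) / (x * x + y * y)) in *.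
  assert (yP : 0 < Rabs y * P) by (apply Rmult_lt_0_compat; [apply Rabs_pos_lt; lra | lra]).
  rewrite ?Rabs_right, ?Rabs_left in yP by lra. nra.
Qed.
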